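(* Let $[t_0,t_1]$ be an admissible segment of $\mathbf r$ with associated tetrahedron $\mathbf r_0\mathbf r_1\mathbf r_2\mathbf r_3$. For any $t^\star\in(t_0,t_1)$ let $\mathbf r_0\mathbf r_1^\star\mathbf r_2^\star\mathbf r_3^\star$ be the associated tetrahedron of the sub-segment $[t_0,t^\star]$. Then (a) $\mathbf r_1^\star$ and $\mathbf r_1$ lie on the same side of $\mathbf r_0$ on the tangent line $T^+(t_0)$; (b) $\mathbf r_2^\star$ and $\mathbf r_2$ lie on the same side of the line $T^+(t_0)$ within the osculating plane $O^+(t_0)$.
   Context: Setting: $\mathbf r(t)=(x(t),y(t),z(t))$ with $x,y,z$ rational functions with real coefficients whose denominators do not vanish on the parameter interval, properly parametrized, and not contained in a plane. Curvature $\kappa=\|\mathbf r'\times\mathbf r''\|/\|\mathbf r'\|^3$; torsion $\tau$ vanishes exactly where $\det(\mathbf r',\mathbf r'',\mathbf r''')=0$. Unit tangent $\boldsymbol\alpha=\mathbf r'/\|\mathbf r'\|$, unit binormal $\boldsymbol\gamma=\mathbf r'\times\mathbf r''/\|\mathbf r'\times\mathbf r''\|$; one-sided limits $\boldsymbol\alpha^{\pm}(s)=\lim_{t\to s^\pm}\boldsymbol\alpha(t)$, $\boldsymbol\gamma^{\pm}(s)=\lim_{t\to s^\pm}\boldsymbol\gamma(t)$; tangent lines $T^{\pm}(s)=\{\mathbf r(s)+\lambda\boldsymbol\alpha^{\pm}(s)\}$, osculating planes $O^{\pm}(s)=\{X:(X-\mathbf r(s))\cdot\boldsymbol\gamma^{\pm}(s)=0\}$.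 A point is singular if it corresponds to more than one parameter counted with multiplicity; character points are singular points, inflections ($\kappa=0$) and torsion-vanishing points ($\tau=0$). Associated tetrahedron of $[a,b]$: vertices $\mathbf r(a)$, $T^+(a)\cap L$, $T^-(b)\cap L$, $\mathbf r(b)$ where $L=O^+(a)\cap O^-(b)$. Admissible segment: $t_0<t_1$, no parameter in $(t_0,t_1]$ gives a character point, and for all $t_0\le s_1<s_2\le t_1$: (I) $\boldsymbol\alpha^+(s_1)\cdot\boldsymbol\gamma^-(s_2)\ne0$ and $\boldsymbol\alpha^-(s_2)\cdot\boldsymbol\gamma^+(s_1)\ne0$; (II) $(\boldsymbol\alpha^+(s_1)\times(\mathbf r(s_2)-\mathbf r(s_1)))\cdot\boldsymbol\alpha^-(s_2)\ne0$; (III) $(\mathbf r(s_1)-\mathbf r(s_2))\cdot\boldsymbol\gamma^-(s_2)\ne0$ and $(\mathbf r(s_2)-\mathbf r(s_1))\cdot\boldsymbol\gamma^+(s_1)\ne0$; and (IV) for all $t_0\le s_1<s_2<s_3\le t_1$, $\det(\boldsymbol\alpha(s_1),\boldsymbol\alpha(s_2),\boldsymbol\alpha(s_3))\ne0$ (one-sided limits used at $t_0,t_1$). *)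

(* Defs.v *)
From Stdlib Require Import Reals List.
Open Scope R_scope.

Record V3 := mkV { vx : R; vy : R; vz : R }.
Definition vadd (u v : V3) : V3 := mkV (vx u + vx v) (vy u + vy v) (vz u + vz v).
Definition vsub (u v : V3) : V3 := mkV (vx u - vx v) (vy u - vy v) (vz u - vz v).
Definition vscale (c : R) (u : V3) : V3 := mkV (c * vx u) (c * vy u) (c * vz u).
Definition dot (u v : V3) : R := vx u * vx v + vy u * vy v + vz u * vz v.
Definition cross (u v : V3) : V3 :=
  mkV (vy u * vz v - vz u * vy v) (vz u * vx v - vx u * vz v) (vx u * vy v - vy u * vx v).
Definition vnorm (u : V3) : R := sqrt (dot u u).
Definition det3 (u v w : V3) : R := dot (cross u v) w.
Definition v0 : V3 := mkV 0 0 0.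

(* ---------- real polynomials (coefficient lists, low degree first) ---------- *)
Fixpoint peval (p : list R) (x : R) : R :=
  match p with nil => 0 | c :: q => c + x * peval q x end.
Fixpoint padd (p q : list R) : list R :=
  match p, q with
  | nil, _ => q
  | _, nil => p
  | a :: p', b :: q' => (a + b) :: padd p' q'
  end.
Definition pscale (c : R) (p : list R) : list R := map (Rmult c) p.
Fixpoint pmul (p q : list R) : list R :=
  match p with nil => nil | a :: p' => padd (pscale a q) (0 :: pmul p' q) end.
Definition psub (p q : list R) : list R := padd p (pscale (-1) q).
Fixpoint pderiv_aux (n : nat) (p : list R) : list R :=
  match p with nil => nil | c :: q => (INR n * c) :: pderiv_aux (S n) q end.
Definition pderiv (p : list R) : list R :=
  match p with nil => nil | _ :: q => pderiv_aux 1 q end.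

Record rfun := mkRF { rnum : list R; rden : list R }.
Definition rf_eval (f : rfun) (t : R) : R := peval (rnum f) t / peval (rden f) t.
(* quotient rule: (p/q)' = (p' q - p q') / q^2 (exact wherever q <> 0) *)
Definition rf_deriv (f : rfun) : rfun :=
  mkRF (psub (pmul (pderiv (rnum f)) (rden f)) (pmul (rnum f) (pderiv (rden f))))
       (pmul (rden f) (rden f)).

Record rcurve := mkC { cx : rfun; cy : rfun; cz : rfun }.
Definition ceval (C : rcurve) (t : R) : V3 :=
  mkV (rf_eval (cx C) t) (rf_eval (cy C) t) (rf_eval (cz C) t).
Definition cderiv (C : rcurve) : rcurve :=
  mkC (rf_deriv (cx C)) (rf_deriv (cy C)) (rf_deriv (cz C)).
Definition r0' (C : rcurve) := ceval C.
Definition r1' (C : rcurve) := ceval (cderiv C).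
Definition r2' (C : rcurve) := ceval (cderiv (cderiv C)).
Definition r3' (C : rcurve) := ceval (cderiv (cderiv (cderiv C))).

Definition curvature (C : rcurve) (t : R) : R :=
  vnorm (cross (r1' C t) (r2' C t)) / (vnorm (r1' C t)) ^ 3.
Definition alpha (C : rcurve) (t : R) : V3 := vscale (/ vnorm (r1' C t)) (r1' C t).
Definition gamma (C : rcurve) (t : R) : V3 :=
  vscale (/ vnorm (cross (r1' C t) (r2' C t))) (cross (r1' C t) (r2' C t)).

Definition rlim (f : R -> V3) (s : R) (l : V3) : Prop :=
  forall eps, 0 < eps -> exists delta, 0 < delta /\
    forall t, s < t < s + delta -> vnorm (vsub (f t) l) < eps.
Definition llim (f : R -> V3) (s : R) (l : V3) : Prop :=
  forall eps, 0 < eps -> exists delta, 0 < delta /\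
    forall t, s - delta < t < s -> vnorm (vsub (f t) l) < eps.

Definition is_interval (I : R -> Prop) : Prop :=
  forall x y z, I x -> I z -> x <= y <= z -> I y.

Definition dens_nonvanishing (C : rcurve) (I : R -> Prop) : Prop :=
  forall t, I t ->
    peval (rden (cx C)) t <> 0 /\ peval (rden (cy C)) t <> 0 /\ peval (rden (cz C)) t <> 0.

(* complex numbers as pairs, used for properness of the parametrization *)
Definition Cx := (R * R)%type.
Definition cadd (z w : Cx) : Cx := (fst z + fst w, snd z + snd w).
Definition cmul (z w : Cx) : Cx :=
  (fst z * fst w - snd z * snd w, fst z * snd w + snd z * fst w).
Fixpoint cpeval (p : list R) (z : Cx) : Cx :=
  match p with nil => (0, 0) | c :: q => cadd (c, 0) (cmul z (cpeval q z)) end.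
(* f(s) = f(t) for a rational function, cleared of denominators *)
Definition rf_ceq (f : rfun) (s t : Cx) : Prop :=
  cmul (cpeval (rnum f) s) (cpeval (rden f) t) = cmul (cpeval (rnum f) t) (cpeval (rden f) s).
Definition rf_cdef (f : rfun) (z : Cx) : Prop := cpeval (rden f) z <> (0, 0).

(* proper (birational) parametrization: apart from finitely many parameter
   values t in C, the point r(t) has no other (complex) preimage *)
Definition proper_param (C : rcurve) : Prop :=
  exists E : list Cx, forall t s : Cx, ~ In t E ->
    rf_cdef (cx C) t -> rf_cdef (cy C) t -> rf_cdef (cz C) t ->
    rf_cdef (cx C) s -> rf_cdef (cy C) s -> rf_cdef (cz C) s ->
    rf_ceq (cx C) s t -> rf_ceq (cy C) s t -> rf_ceq (cz C) s t -> s = t.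

Definition not_planar (C : rcurve) (I : R -> Prop) : Prop :=
  ~ exists (n : V3) (c : R), n <> v0 /\ forall t, I t -> dot n (r0' C t) = c.

Definition standing (C : rcurve) (I : R -> Prop) : Prop :=
  is_interval I /\ dens_nonvanishing C I /\ proper_param C /\ not_planar C I.

(* singular: the point corresponds to more than one parameter counted with
   multiplicity (another parameter in I, or a cusp r'(t) = 0) *)
Definition singular_param (C : rcurve) (I : R -> Prop) (t : R) : Prop :=
  (exists s, I s /\ s <> t /\ r0' C s = r0' C t) \/ r1' C t = v0.
Definition character_param (C : rcurve) (I : R -> Prop) (t : R) : Prop :=
  singular_param C I t \/ curvature C t = 0 \/
  det3 (r1' C t) (r2' C t) (r3' C t) = 0.

Definition admissible (C : rcurve) (I : R -> Prop) (t0 t1 : R) : Prop :=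
  I t0 /\ I t1 /\ t0 < t1 /\
  (forall t, t0 < t <= t1 -> ~ character_param C I t) /\
  (forall s1 s2, t0 <= s1 -> s1 < s2 -> s2 <= t1 ->
    forall ap1 gp1 am2 gm2,
      rlim (alpha C) s1 ap1 -> rlim (gamma C) s1 gp1 ->
      llim (alpha C) s2 am2 -> llim (gamma C) s2 gm2 ->
      (* (I) *)
      (dot ap1 gm2 <> 0 /\ dot am2 gp1 <> 0) /\
      (* (II) *)
      dot (cross ap1 (vsub (r0' C s2) (r0' C s1))) am2 <> 0 /\
      (* (III) *)
      (dot (vsub (r0' C s1) (r0' C s2)) gm2 <> 0 /\
       dot (vsub (r0' C s2) (r0' C s1)) gp1 <> 0)) /\
  (* (IV), with one-sided limits at the ends *)
  (forall s1 s2 s3, t0 <= s1 -> s1 < s2 -> s2 < s3 -> s3 <= t1 ->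
    forall a1 a3, rlim (alpha C) s1 a1 -> llim (alpha C) s3 a3 ->
      det3 a1 (alpha C s2) a3 <> 0).

Definition on_line (p d X : V3) : Prop := exists lam, X = vadd p (vscale lam d).
Definition on_plane (p n X : V3) : Prop := dot (vsub X p) n = 0.

(* Vertex T^+(a) ∩ L of the associated tetrahedron of [a,b], where
   L = O^+(a) ∩ O^-(b); aa = alpha^+(a), ga = gamma^+(a), gb = gamma^-(b). *)
Definition tet_v1 (C : rcurve) (a b : R) (aa ga gb X : V3) : Prop :=
  on_line (r0' C a) aa X /\ on_plane (r0' C a) ga X /\ on_plane (r0' C b) gb X.
(* Vertex T^-(b) ∩ L; ab = alpha^-(b). *)
Definition tet_v2 (C : rcurve) (a b : R) (ga ab gb X : V3) : Prop :=
  on_line (r0' C b) ab X /\ on_plane (r0' C a) ga X /\ on_plane (r0' C b) gb X.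

Definition same_side_on_line (p P Q : V3) : Prop :=
  P <> p /\ exists mu, 0 < mu /\ vsub Q p = vscale mu (vsub P p).
Definition same_side_in_plane (p d n P Q : V3) : Prop :=
  det3 d (vsub P p) n * det3 d (vsub Q p) n > 0.

(* Main.v *)
Require Import Defs.
From Stdlib Require Import Reals List Lra Psatz Ranalysis5.
Open Scope R_scope.

Lemma cp_mult f g x : continuity_pt f x -> continuity_pt g x -> continuity_pt (fun t => f t * g t) x.
Proof. intros; exact (continuity_pt_mult f g x H H0). Qed.
Lemma cp_plus f g x : continuity_pt f x -> continuity_pt g x -> continuity_pt (fun t => f t + g t) x.
Proof. intros; exact (continuity_pt_plus f g x H H0). Qed.
Lemma cp_minus f g x : continuity_pt f x -> continuity_pt g x -> continuity_pt (fun t => f t - g t) x.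
Proof. intros; exact (continuity_pt_minus f g x H H0). Qed.
Lemma cp_const c x : continuity_pt (fun _ => c) x.
Proof. exact (continuity_pt_const (fun _ => c) x (fun _ _ => eq_refl)). Qed.
Lemma cp_id x : continuity_pt (fun t => t) x.
Proof. exact (derivable_continuous_pt id x (derivable_pt_id x)). Qed.
Lemma cp_inv f x : continuity_pt f x -> f x <> 0 -> continuity_pt (fun t => / f t) x.
Proof. intros; exact (continuity_pt_inv f x H H0). Qed.
Lemma cp_div f g x : continuity_pt f x -> continuity_pt g x -> g x <> 0 -> continuity_pt (fun t => f t / g t) x.
Proof. intros; exact (continuity_pt_div f g x H H0 H1). Qed.
Lemma cp_sqrt f x : continuity_pt f x -> 0 <= f x -> continuity_pt (fun t => sqrt (f t)) x.
Proof. intros. exact (continuity_pt_comp f sqrt x H (continuity_pt_sqrt _ H0)). Qed.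

Lemma cp_eps f x : continuity_pt f x -> forall eps, 0 < eps -> exists d, 0 < d /\
  forall t, Rabs (t - x) < d -> Rabs (f t - f x) < eps.
Proof.
  intros H eps He. destruct (H eps He) as [d [Hd Hf]]. exists d; split; auto.
  intros t Ht. destruct (Req_dec x t) as [<-|Hne].
  - replace (f x - f x) with 0 by ring. rewrite Rabs_R0; auto.
  - apply (Hf t). split. split; auto. exact I. exact Ht.
Qed.

Lemma eps_cp f x : (forall eps, 0 < eps -> exists d, 0 < d /\
  forall t, Rabs (t - x) < d -> Rabs (f t - f x) < eps) -> continuity_pt f x.
Proof.
  intros H eps He. destruct (H eps He) as [d [Hd Hf]]. exists d; split; auto.
  intros t [_ Ht]. apply Hf. exact Ht.
Qed.

Definition vc (f : R -> V3) x := continuity_pt (fun t => vx (f t)) x /\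
  continuity_pt (fun t => vy (f t)) x /\ continuity_pt (fun t => vz (f t)) x.

Lemma vc_const c x : vc (fun _ => c) x.
Proof. repeat split; apply cp_const. Qed.
Lemma vc_sub f g x : vc f x -> vc g x -> vc (fun t => vsub (f t) (g t)) x.
Proof. intros [? [? ?]] [? [? ?]]; repeat split; simpl; apply cp_minus; auto. Qed.
Lemma vc_scale c f x : continuity_pt c x -> vc f x -> vc (fun t => vscale (c t) (f t)) x.
Proof. intros ? [? [? ?]]; repeat split; simpl; apply cp_mult; auto. Qed.
Lemma vc_cross f g x : vc f x -> vc g x -> vc (fun t => cross (f t) (g t)) x.
Proof. intros [? [? ?]] [? [? ?]]; repeat split; simpl; apply cp_minus; apply cp_mult; auto. Qed.
Lemma dot_cont f g x : vc f x -> vc g x -> continuity_pt (fun t => dot (f t) (g t)) x.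
Proof. intros [? [? ?]] [? [? ?]]; unfold dot; repeat apply cp_plus; apply cp_mult; auto. Qed.
Lemma dot_ge0 u : 0 <= dot u u.
Proof. unfold dot; nra. Qed.
Lemma vnorm_cont f x : vc f x -> continuity_pt (fun t => vnorm (f t)) x.
Proof. intros; unfold vnorm; apply cp_sqrt. apply dot_cont; auto. apply dot_ge0. Qed.

Lemma dot_pos u : u <> v0 -> 0 < dot u u.
Proof.
  intros H. destruct u as [a b c]. unfold dot; simpl.
  destruct (Req_dec a 0); destruct (Req_dec b 0); destruct (Req_dec c 0); subst;
  try (exfalso; apply H; reflexivity); try nra.
Qed.
Lemma vnorm_pos u : u <> v0 -> 0 < vnorm u.
Proof. intros; unfold vnorm; apply sqrt_lt_R0, dot_pos; auto. Qed.

Lemma vnorm_v0 : vnorm v0 = 0.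
Proof. unfold vnorm, dot; simpl. replace (0*0+0*0+0*0) with 0 by ring. apply sqrt_0. Qed.

Lemma unit_dot u : u <> v0 -> dot (vscale (/ vnorm u) u) (vscale (/ vnorm u) u) = 1.
Proof.
  intros H. pose proof (dot_pos u H). pose proof (vnorm_pos u H).
  assert (Hs : vnorm u * vnorm u = dot u u) by (unfold vnorm; apply sqrt_sqrt; lra).
  set (n := vnorm u) in *. clearbody n.
  destruct u as [a b c]. unfold dot in *; simpl in *.
  replace (/ n * a * (/ n * a) + / n * b * (/ n * b) + / n * c * (/ n * c)) with ((a*a+b*b+c*c) / (n*n)) by (field; lra).
  rewrite Hs. field. lra.
Qed.

Lemma vx_le u : Rabs (vx u) <= vnorm u.
Proof. unfold vnorm. rewrite <- sqrt_Rsqr_abs. apply sqrt_le_1_alt. unfold Rsqr, dot; nra. Qed.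
Lemma vy_le u : Rabs (vy u) <= vnorm u.
Proof. unfold vnorm. rewrite <- sqrt_Rsqr_abs. apply sqrt_le_1_alt. unfold Rsqr, dot; nra. Qed.
Lemma vz_le u : Rabs (vz u) <= vnorm u.
Proof. unfold vnorm. rewrite <- sqrt_Rsqr_abs. apply sqrt_le_1_alt. unfold Rsqr, dot; nra. Qed.

Lemma vnorm_small u e : 0 < e -> Rabs (vx u) < e/2 -> Rabs (vy u) < e/2 -> Rabs (vz u) < e/2 -> vnorm u < e.
Proof.
  intros He H1 H2 H3. unfold vnorm. rewrite <- (sqrt_Rsqr e) by lra.
  apply sqrt_lt_1_alt. split. apply dot_ge0.
  destruct u as [a b c]; unfold dot, Rsqr; simpl in *.
  apply Rabs_def2 in H1; apply Rabs_def2 in H2; apply Rabs_def2 in H3. nra.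
Qed.

Lemma vc_llim f x : vc f x -> llim f x (f x).
Proof.
  intros [H1 [H2 H3]] eps He.
  destruct (cp_eps _ _ H1 (eps/2)) as [d1 [Hd1 F1]]; [lra|].
  destruct (cp_eps _ _ H2 (eps/2)) as [d2 [Hd2 F2]]; [lra|].
  destruct (cp_eps _ _ H3 (eps/2)) as [d3 [Hd3 F3]]; [lra|].
  exists (Rmin d1 (Rmin d2 d3)). split. repeat apply Rmin_pos; auto.
  intros t Ht.
  assert (Rabs (t - x) < d1 /\ Rabs (t - x) < d2 /\ Rabs (t - x) < d3) as [A1 [A2 A3]].
  { pose proof (Rmin_l d1 (Rmin d2 d3)); pose proof (Rmin_r d1 (Rmin d2 d3));
    pose proof (Rmin_l d2 d3); pose proof (Rmin_r d2 d3).
    rewrite Rabs_left by lra. lra. }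
  apply vnorm_small; simpl; auto.
Qed.

Lemma abs_le_b x y : Rabs x <= y -> -y <= x <= y.
Proof. unfold Rabs; destruct Rcase_abs; lra. Qed.

Lemma llim_unique f x l1 l2 : llim f x l1 -> llim f x l2 -> l1 = l2.
Proof.
  intros H1 H2.
  assert (K : forall eps, 0 < eps -> vnorm (vsub l1 l2) < eps \/ True) by auto.
  assert (C : forall eps, 0 < eps -> Rabs (vx l1 - vx l2) < eps /\ Rabs (vy l1 - vy l2) < eps /\ Rabs (vz l1 - vz l2) < eps).
  { intros eps He. destruct (H1 (eps/2)) as [d1 [Hd1 F1]]; [lra|].
    destruct (H2 (eps/2)) as [d2 [Hd2 F2]]; [lra|].
    set (t := x - Rmin d1 d2 / 2).
    pose proof (Rmin_l d1 d2); pose proof (Rmin_r d1 d2); pose proof (Rmin_pos d1 d2 Hd1 Hd2).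
    assert (T1 : x - d1 < t < x) by (unfold t; lra).
    assert (T2 : x - d2 < t < x) by (unfold t; lra).
    specialize (F1 t T1); specialize (F2 t T2).
    pose proof (vx_le (vsub (f t) l1)); pose proof (vx_le (vsub (f t) l2));
    pose proof (vy_le (vsub (f t) l1)); pose proof (vy_le (vsub (f t) l2));
    pose proof (vz_le (vsub (f t) l1)); pose proof (vz_le (vsub (f t) l2)).
    simpl in *.
    repeat match goal with H : Rabs _ <= _ |- _ => apply abs_le_b in H end.
    repeat split; apply Rabs_def1; lra. }
  assert (Z : forall a b, (forall eps, 0 < eps -> Rabs (a - b) < eps) -> a = b).
  { intros a b Hab. destruct (Req_dec a b); auto. exfalso.
    specialize (Hab (Rabs (a - b))). assert (0 < Rabs (a-b)). apply Rabs_pos_lt; lra. lra. }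
  destruct l1, l2; simpl in *. f_equal; apply Z; intros; apply C; auto.
Qed.

Lemma rlim_vc f s l : rlim f s l -> vc (fun t => if Rle_dec t s then l else f t) s.
Proof.
  intros H.
  assert (G : forall (p : V3 -> R), (forall u, Rabs (p u) <= vnorm u) -> (forall u v, p (vsub u v) = p u - p v) ->
     continuity_pt (fun t => p (if Rle_dec t s then l else f t)) s).
  { intros p Hp Hs. apply eps_cp. intros eps He. destruct (H eps He) as [d [Hd F]].
    exists d; split; auto. intros t Ht.
    destruct (Rle_dec s s) as [_|N]; [|lra].
    destruct (Rle_dec t s).
    - replace (p l - p l) with 0 by ring. rewrite Rabs_R0; auto.
    - rewrite <- Hs. eapply Rle_lt_trans. apply Hp. apply F.
      apply Rabs_def2 in Ht. lra. }
  repeat split.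
  - apply (G vx). apply vx_le. reflexivity.
  - apply (G vy). apply vy_le. reflexivity.
  - apply (G vz). apply vz_le. reflexivity.
Qed.

Lemma eps_zero a : (forall eps, 0 < eps -> Rabs a < eps) -> a = 0.
Proof.
  intros H. destruct (Req_dec a 0); auto. exfalso.
  specialize (H (Rabs a) (Rabs_pos_lt a H0)). lra.
Qed.

Lemma rlim_dot f g s l m c d0 : rlim f s l -> rlim g s m -> 0 < d0 ->
  (forall t, s < t < s + d0 -> dot (f t) (g t) = c) -> dot l m = c.
Proof.
  intros Hf Hg Hd0 Hc.
  pose proof (dot_cont _ _ s (rlim_vc f s l Hf) (rlim_vc g s m Hg)) as K.
  simpl in K. destruct (Rle_dec s s) as [_|N]; [|lra].
  assert (dot l m - c = 0); [|lra].
  apply eps_zero. intros eps He.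
  destruct (cp_eps _ _ K eps He) as [d [Hd F]].
  set (t := s + Rmin d d0 / 2).
  pose proof (Rmin_l d d0); pose proof (Rmin_r d d0); pose proof (Rmin_pos d d0 Hd Hd0).
  assert (Ht : Rabs (t - s) < d) by (unfold t; rewrite Rabs_right; lra).
  specialize (F t Ht). destruct (Rle_dec t s) as [N|_]; [unfold t in N; lra|].
  rewrite Hc in F by (unfold t; lra). rewrite <- Rabs_Ropp. replace (- (dot l m - c)) with (c - dot l m) by ring. destruct (Rle_dec s s); [exact F|lra].
Qed.

Lemma peval_padd p q x : peval (padd p q) x = peval p x + peval q x.
Proof.
  revert q; induction p as [|a p IH]; intros [|b q]; simpl; try ring.
  rewrite IH; ring.
Qed.
Lemma peval_pscale c p x : peval (pscale c p) x = c * peval p x.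
Proof. induction p as [|a p IH]; simpl; [ring|]. rewrite IH; ring. Qed.
Lemma peval_pmul p q x : peval (pmul p q) x = peval p x * peval q x.
Proof.
  induction p as [|a p IH]; simpl; [ring|].
  rewrite peval_padd, peval_pscale; simpl. rewrite IH; ring.
Qed.
Lemma peval_cont p x : continuity_pt (fun t => peval p t) x.
Proof.
  induction p as [|a p IH]; simpl. apply cp_const.
  apply cp_plus. apply cp_const. apply cp_mult. apply cp_id. exact IH.
Qed.

Definition rf_ok (f : rfun) t := peval (rden f) t <> 0.
Lemma rf_cont f x : rf_ok f x -> continuity_pt (fun t => rf_eval f t) x.
Proof. intros H; unfold rf_eval; apply cp_div; auto; apply peval_cont. Qed.
Lemma rf_deriv_ok f x : rf_ok f x -> rf_ok (rf_deriv f) x.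
Proof. unfold rf_ok, rf_deriv; simpl; intros; rewrite peval_pmul. apply Rmult_integral_contrapositive; auto. Qed.

Definition c_ok (C : rcurve) t := rf_ok (cx C) t /\ rf_ok (cy C) t /\ rf_ok (cz C) t.
Lemma c_cont C x : c_ok C x -> vc (ceval C) x.
Proof. intros [? [? ?]]; repeat split; simpl; apply rf_cont; auto. Qed.
Lemma cderiv_ok C x : c_ok C x -> c_ok (cderiv C) x.
Proof. intros [? [? ?]]; repeat split; simpl; apply rf_deriv_ok; auto. Qed.

Lemma alpha_cont C x : c_ok C x -> r1' C x <> v0 -> vc (alpha C) x.
Proof.
  intros H Hn. unfold alpha. apply vc_scale.
  - apply cp_inv. apply vnorm_cont. apply c_cont, cderiv_ok; auto.
    pose proof (vnorm_pos _ Hn); lra.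
  - apply c_cont, cderiv_ok; auto.
Qed.
Lemma gamma_cont C x : c_ok C x -> cross (r1' C x) (r2' C x) <> v0 -> vc (gamma C) x.
Proof.
  intros H Hn. pose proof (cderiv_ok _ _ H) as H1. pose proof (cderiv_ok _ _ H1) as H2.
  assert (V : vc (fun t => cross (r1' C t) (r2' C t)) x) by (apply vc_cross; apply c_cont; auto).
  unfold gamma. apply vc_scale; auto.
  apply cp_inv. apply vnorm_cont; auto. pose proof (vnorm_pos _ Hn); lra.
Qed.

Lemma same_sign phi a b : a < b -> (forall x, a <= x <= b -> continuity_pt phi x) ->
  (forall x, a <= x <= b -> phi x <> 0) -> 0 < phi a * phi b.
Proof.
  intros Hab Hc Hn.
  assert (Na := Hn a ltac:(lra)). assert (Nb := Hn b ltac:(lra)).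
  destruct (Rlt_or_le (phi a) 0) as [A1|A1]; destruct (Rlt_or_le (phi b) 0) as [B1|B1].
  - nra.
  - assert (0 < phi b) by lra. destruct (IVT_interv phi a b Hc Hab A1 H) as [z [Hz Hz0]].
    exfalso; apply (Hn z Hz Hz0).
  - assert (0 < phi a) by lra.
    destruct (IVT_interv (fun t => - phi t) a b) as [z [Hz Hz0]]; auto; try lra.
    intros; apply (continuity_pt_opp phi); auto.
    exfalso; apply (Hn z Hz); lra.
  - nra.
Qed.

Lemma line_plane p d q n lam : dot (vsub (vadd p (vscale lam d)) q) n = 0 -> lam * dot d n = dot (vsub q p) n.
Proof. destruct p, d, q, n; unfold dot; simpl; intros; nra. Qed.

Lemma line_ne p d lam : vadd p (vscale lam d) = p -> dot d d = 1 -> lam = 0.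
Proof.
  destruct p as [a b c], d as [x y z]; unfold dot, vadd, vscale; simpl; intros H H1.
  injection H; intros. nra.
Qed.

Lemma line_ratio p d lam mu : lam <> 0 ->
  vsub (vadd p (vscale mu d)) p = vscale (mu/lam) (vsub (vadd p (vscale lam d)) p).
Proof. intros; destruct p, d; unfold vsub, vadd, vscale; simpl; f_equal; field; auto. Qed.

Lemma line_sub p q d n lam : dot d n <> 0 -> lam * dot d n = dot (vsub q p) n ->
  vsub (vadd p (vscale lam d)) q = vsub (vsub p q) (vscale (dot (vsub p q) n / dot d n) d).
Proof.
  intros Hn H.
  assert (lam = dot (vsub q p) n / dot d n) by (apply (Rmult_eq_reg_r (dot d n)); auto; field_simplify; auto).
  subst lam. destruct p, q, d, n; unfold vsub, vadd, vscale, dot in *; simpl in *; f_equal; field; auto.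
Qed.

Lemma hnz A G al D c : dot A G = 0 -> dot G G = 1 -> dot G (vsub D (vscale c al)) = 0 ->
  dot (cross A D) al <> 0 -> det3 A (vsub D (vscale c al)) G <> 0.
Proof.
  intros H1 H2 H3 H4 H5. apply H4.
  set (X := vsub D (vscale c al)) in *.
  assert (Hw : dot (cross A X) al = dot (cross A D) al)
    by (unfold X; destruct A, D, al; unfold dot, cross, vsub, vscale; simpl; ring).
  clearbody X.
  assert (Hid : dot G G * dot (cross A X) al = dot G al * det3 A X G - dot G X * dot (cross G A) al + dot G A * dot (cross G X) al)
    by (destruct G, A, X, al; unfold det3, dot, cross; simpl; ring).
  assert (HGA : dot G A = 0) by (rewrite <- H1; destruct G, A; unfold dot; simpl; ring).
  rewrite H2, H3, H5, Hw, HGA in Hid. lra.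
Qed.

Lemma alpha_gamma_dot C t : dot (alpha C t) (gamma C t) = 0.
Proof.
  unfold alpha, gamma. set (a := / vnorm _). set (b := / vnorm _).
  destruct (r1' C t), (r2' C t); unfold dot, cross, vscale; simpl; ring.
Qed.

Lemma dot_vsub_swap p q g : dot (vsub p q) g = - dot (vsub q p) g.
Proof. destruct p, q, g; unfold dot; simpl; ring. Qed.

Theorem lemma3 (C : rcurve) (I : R -> Prop) (t0 t1 : R) :
  standing C I ->
  admissible C I t0 t1 ->
  forall ts : R, t0 < ts < t1 ->
  forall a0 g0 a1 g1 as_ gs : V3,
    rlim (alpha C) t0 a0 -> rlim (gamma C) t0 g0 ->
    llim (alpha C) t1 a1 -> llim (gamma C) t1 g1 ->
    llim (alpha C) ts as_ -> llim (gamma C) ts gs ->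
  forall P1 P2 Q1 Q2 : V3,
    tet_v1 C t0 t1 a0 g0 g1 P1 -> tet_v2 C t0 t1 g0 a1 g1 P2 ->
    tet_v1 C t0 ts a0 g0 gs Q1 -> tet_v2 C t0 ts g0 as_ gs Q2 ->
    same_side_on_line (r0' C t0) P1 Q1 /\
    same_side_in_plane (r0' C t0) a0 g0 P2 Q2.
Proof.
  intros Hst Had ts Hts a0 g0 a1 g1 as_ gs Ha0 Hg0 Ha1 Hg1 Has Hgs P1 P2 Q1 Q2 HP1 HP2 HQ1 HQ2.
  destruct Hst as [Hint [Hden _]].
  destruct Had as [HI0 [HI1 [Hlt [Hnc [Hadm _]]]]].
  assert (Ok : forall s, t0 < s <= t1 ->
     c_ok C s /\ r1' C s <> v0 /\ cross (r1' C s) (r2' C s) <> v0).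
  { intros s Hs. assert (Is : I s) by (apply (Hint t0 s t1); auto; lra).
    destruct (Hden s Is) as [D1 [D2 D3]].
    specialize (Hnc s Hs). split; [repeat split; auto|]. split.
    - intro E. apply Hnc. left. right. exact E.
    - intro E. apply Hnc. right. left. unfold curvature. rewrite E, vnorm_v0. unfold Rdiv. ring. }
  assert (VA : forall s, t0 < s <= t1 -> vc (alpha C) s)
    by (intros s Hs; destruct (Ok s Hs) as [? [? ?]]; apply alpha_cont; auto).
  assert (VG : forall s, t0 < s <= t1 -> vc (gamma C) s)
    by (intros s Hs; destruct (Ok s Hs) as [? [? ?]]; apply gamma_cont; auto).
  assert (VR : forall s, t0 < s <= t1 -> vc (r0' C) s)
    by (intros s Hs; destruct (Ok s Hs) as [? [? ?]]; apply c_cont; auto).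
  assert (Adm : forall s, t0 < s <= t1 ->
     (dot a0 (gamma C s) <> 0 /\ dot (alpha C s) g0 <> 0) /\
     dot (cross a0 (vsub (r0' C s) (r0' C t0))) (alpha C s) <> 0 /\
     (dot (vsub (r0' C t0) (r0' C s)) (gamma C s) <> 0 /\
      dot (vsub (r0' C s) (r0' C t0)) g0 <> 0)).
  { intros s Hs. apply Hadm; try lra; auto; apply vc_llim; auto. }
  assert (E1 : a1 = alpha C t1) by (eapply llim_unique; [exact Ha1| apply vc_llim, VA; lra]).
  assert (E2 : g1 = gamma C t1) by (eapply llim_unique; [exact Hg1| apply vc_llim, VG; lra]).
  assert (E3 : as_ = alpha C ts) by (eapply llim_unique; [exact Has| apply vc_llim, VA; lra]).
  assert (E4 : gs = gamma C ts) by (eapply llim_unique; [exact Hgs| apply vc_llim, VG; lra]).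
  subst a1 g1 as_ gs.
  assert (AG : dot a0 g0 = 0).
  { apply (rlim_dot _ _ _ _ _ _ (t1 - t0) Ha0 Hg0); [lra|]. intros; apply alpha_gamma_dot. }
  assert (GG : dot g0 g0 = 1).
  { apply (rlim_dot _ _ _ _ _ _ (t1 - t0) Hg0 Hg0); [lra|]. intros t Ht.
    destruct (Ok t ltac:(lra)) as [_ [_ Hc]]. apply unit_dot; auto. }
  assert (AA : dot a0 a0 = 1).
  { apply (rlim_dot _ _ _ _ _ _ (t1 - t0) Ha0 Ha0); [lra|]. intros t Ht.
    destruct (Ok t ltac:(lra)) as [_ [Hc _]]. apply unit_dot; auto. }
  set (r := r0' C) in *.
  set (f := fun s => dot (vsub (r s) (r t0)) (gamma C s) / dot a0 (gamma C s)).
  set (h := fun s => det3 a0 (vsub (vsub (r s) (r t0))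
             (vscale (dot (vsub (r s) (r t0)) g0 / dot (alpha C s) g0) (alpha C s))) g0).
  assert (Sf : 0 < f ts * f t1).
  { apply same_sign; [lra| |].
    - intros x Hx. destruct (Adm x ltac:(lra)) as [[N1 _] _].
      unfold f. apply cp_div; auto.
      + apply dot_cont. apply vc_sub. apply VR; lra. apply vc_const. apply VG; lra.
      + apply dot_cont. apply vc_const. apply VG; lra.
    - intros x Hx. destruct (Adm x ltac:(lra)) as [[N1 _] [_ [N3 _]]].
      unfold f. intro Z. apply Rmult_integral in Z. destruct Z as [Z|Z].
      + apply N3. rewrite dot_vsub_swap, Z. ring.
      + apply Rinv_neq_0_compat in N1. contradiction. }
  assert (Sh : 0 < h ts * h t1).
  { apply same_sign; [lra| |].
    - intros x Hx. destruct (Adm x ltac:(lra)) as [[_ N2] _].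
      unfold h, det3. apply dot_cont; [|apply vc_const].
      apply vc_cross. apply vc_const. apply vc_sub.
      apply vc_sub. apply VR; lra. apply vc_const.
      apply vc_scale. apply cp_div; auto.
      apply dot_cont. apply vc_sub. apply VR; lra. apply vc_const. apply vc_const.
      apply dot_cont. apply VA; lra. apply vc_const. apply VA; lra.
    - intros x Hx. destruct (Adm x ltac:(lra)) as [[_ N2] [N4 _]].
      unfold h. apply hnz; auto.
      destruct (vsub (r x) (r t0)), (alpha C x), g0; unfold dot, vsub, vscale in *; simpl in *.
      field; auto. }
  split.
  - destruct HP1 as [[l HP] [_ Hl]]. destruct HQ1 as [[m HQ] [_ Hm]]. subst P1 Q1.
    apply line_plane in Hl. apply line_plane in Hm.
    destruct (Adm t1 ltac:(lra)) as [[N1 _] _]. destruct (Adm ts ltac:(lra)) as [[N1' _] _].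
    assert (Lf : l = f t1) by (unfold f, r in *; apply (Rmult_eq_reg_r (dot a0 (gamma C t1))); auto; cbv beta; rewrite Hl; field; auto).
    assert (Mf : m = f ts) by (unfold f, r in *; apply (Rmult_eq_reg_r (dot a0 (gamma C ts))); auto; cbv beta; rewrite Hm; field; auto).
    assert (Ln : l <> 0) by (intro; subst; rewrite H in Sf; lra).
    split.
    + intro E. apply Ln. eapply line_ne; eauto.
    + exists (m / l). split.
      * rewrite Lf, Mf. replace (f ts / f t1) with (f ts * f t1 / (f t1 * f t1)) by (field; rewrite <- Lf; auto).
        apply Rdiv_lt_0_compat; auto. rewrite <- Lf. nra.
      * apply line_ratio; auto.
  - destruct HP2 as [[l HP] [Hl _]]. destruct HQ2 as [[m HQ] [Hm _]]. subst P2 Q2.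
    apply line_plane in Hl. apply line_plane in Hm.
    destruct (Adm t1 ltac:(lra)) as [[_ N2] _]. destruct (Adm ts ltac:(lra)) as [[_ N2'] _].
    unfold same_side_in_plane.
    change (r0' C) with r in Hl, Hm |- *. rewrite (line_sub _ _ _ _ _ N2 Hl), (line_sub _ _ _ _ _ N2' Hm).
    fold (h t1). fold (h ts). lra.
Qed.
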